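(* Let $A\in\mathbb{R}^{n\times m}$ with $n<m$ have columns $\alpha_1,\dots,\alpha_m$ with $\|\alpha_i\|_2=1$ for all $i$, and let $\mu=\max_{i\neq j}|\langle\alpha_i,\alpha_j\rangle|$ be its coherence, assumed positive. Let $c_{ij}=\langle\alpha_i,\alpha_j\rangle$, $\nu(i)=\max_{j\neq i}\frac{|c_{ij}|}{c_{ii}}$, $\rho(i)=\frac{\nu(i)}{\nu(i)+1}$, and let $l^*$ be the largest integer $l\in\{0,\dots,m\}$ such that the sum of the $l$ largest values among $\rho(1),\dots,\rho(m)$ is $<\frac12$. Then for every integer $k$ with $k<\frac12(1+\mu^{-1})$ we have $\max_{\mathcal{S}\subseteq[m],|\mathcal{S}|=k}\sum_{i\in\mathcal{S}}\rho(i)<\frac12$, and hence $l^*\ge k$.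
   Context: $[m]=\{1,\dots,m\}$. $\langle\cdot,\cdot\rangle$ is the Euclidean inner product. *)

(* Defs.v *)
From HB Require Import structures.
From mathcomp Require Import all_boot all_order all_algebra.
Set Implicit Arguments. Unset Strict Implicit. Unset Printing Implicit Defensive.
Import Order.TTheory GRing.Theory Num.Theory.
Local Open Scope ring_scope.

Section Coherence.
Variables (R : realFieldType) (n m : nat).

Definition gram (A : 'M[R]_(n, m)) (i j : 'I_m) : R :=
  \sum_(k < n) A k i * A k j.

(* mu = max_{i <> j} |<alpha_i, alpha_j>| (all values are >= 0, so 0 is a neutral default) *)
Definition coherence (A : 'M[R]_(n, m)) : R :=
  \big[Num.max/0]_(i < m) \big[Num.max/0]_(j < m | j != i) `|gram A i j|.

Definition nu (A : 'M[R]_(n, m)) (i : 'I_m) : R :=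
  \big[Num.max/0]_(j < m | j != i) (`|gram A i j| / gram A i i).

Definition rho (A : 'M[R]_(n, m)) (i : 'I_m) : R := nu A i / (nu A i + 1).

Definition top_sum (A : 'M[R]_(n, m)) (l : nat) : R :=
  \sum_(k < l) nth 0 (sort (fun x y : R => y <= x) [seq rho A i | i : 'I_m]) k.

Definition l_star (A : 'M[R]_(n, m)) : nat :=
  \max_(l < m.+1 | top_sum A l < 2^-1) l.

End Coherence.

(* Main.v *)
Require Import Defs.
From HB Require Import structures.
From mathcomp Require Import all_boot all_order all_algebra.
From mathcomp Require Import ring lra zify.
Import Order.TTheory GRing.Theory Num.Theory.
Local Open Scope ring_scope.

Lemma bigmax_ge (R : realDomainType) (I : eqType) (r : seq I) (P : pred I)
  (F : I -> R) i : i \in r -> P i -> F i <= \big[Num.max/0]_(j <- r | P j) F j.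
Proof.
elim: r => // a r IH; rewrite in_cons big_cons => /orP [/eqP <- Pi | ir Pi].
  by rewrite Pi le_max lexx.
case: (P a); last exact: IH.
by rewrite le_max (IH ir Pi) orbT.
Qed.

Lemma bigmax_le (R : realDomainType) (I : Type) (r : seq I) (P : pred I)
  (F : I -> R) b : 0 <= b -> (forall i, P i -> F i <= b) ->
  \big[Num.max/0]_(j <- r | P j) F j <= b.
Proof.
move=> b0 H; elim/big_ind: _ => //.
  by move=> x y hx hy; rewrite ge_max hx hy.
Qed.

Section Proof.
Variables (R : realFieldType) (n m : nat) (A : 'M[R]_(n, m)).
Hypothesis hnorm : forall i : 'I_m, \sum_(k < n) A k i ^+ 2 = 1.

Lemma gram_ii i : gram A i i = 1.
Proof. rewrite /gram -(hnorm i); apply: eq_bigr => k _; by rewrite expr2. Qed.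

Lemma gram_le i j : j != i -> `|gram A i j| <= coherence A.
Proof.
move=> ji; rewrite /coherence.
apply: le_trans (@bigmax_ge _ _ _ xpredT (fun i0 : 'I_m => \big[Num.max/0]_(j0 < m | j0 != i0) `|gram A i0 j0|) i (mem_index_enum i) (erefl true)).
exact: (@bigmax_ge _ _ _ (fun j0 => j0 != i) (fun j0 => `|gram A i j0|) j (mem_index_enum j) ji).
Qed.

Lemma coh_ge0 : 0 <= coherence A.
Proof.
rewrite /coherence; elim/big_ind: _ => //.
  by move=> x y hx _; rewrite le_max hx.
move=> i _; elim/big_ind: _ => //.
by move=> x y hx _; rewrite le_max hx.
Qed.

Lemma nu_ge0 i : 0 <= nu A i.
Proof.
rewrite /nu; elim/big_ind: _ => //; first by move=> x y hx _; rewrite le_max hx.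
by move=> j _; rewrite gram_ii divr1.
Qed.

Lemma nu_le i : nu A i <= coherence A.
Proof.
apply: bigmax_le; first exact: coh_ge0.
by move=> j ji; rewrite gram_ii divr1 gram_le.
Qed.

Lemma rho_le i : rho A i <= coherence A / (coherence A + 1).
Proof.
have h0 := nu_ge0 i; have h1 := nu_le i; have h2 := coh_ge0.
rewrite /rho ler_pdivrMr ?ltr_wpDl // mulrAC ler_pdivlMr ?ltr_wpDl //.
nra.
Qed.

Lemma rho_bound_ge0 : 0 <= coherence A / (coherence A + 1).
Proof. have h2 := coh_ge0; apply: divr_ge0 => //; lra. Qed.

Lemma coh_lower : (n < m)%N -> 1 <= (m.-1)%:R * coherence A.
Proof.
move=> nm.
set K := kermx A^T.
have rk : (0 < \rank K)%N.
  rewrite mxrank_ker; have := rank_leq_col A^T; lia.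
have kerK : K *m A^T = 0 := mulmx_ker _.
clearbody K.
have : ~~ [forall r, forall j, K r j == 0].
  apply: contraTN rk => /forallP H; suff -> : K = 0 by rewrite mxrank0.
  apply/matrixP => r j; rewrite [in RHS]mxE; apply/eqP; exact: (forallP (H r) j).
move=> /forallPn [r] /forallPn [j0 Kj0].
pose x (j : 'I_m) := K r j.
have ker k : \sum_j A k j * x j = 0.
  have := congr1 (fun M : 'M[R]_(m,n) => M r k) kerK.
  rewrite !mxE => H; rewrite -[X in _ = X]H; apply: eq_bigr => j _; by rewrite mxE mulrC.
case: (@arg_maxP _ _ _ j0 xpredT (fun j => `|x j|) isT) => i _ Hi.
have xi0 : 0 < `|x i|.
  by apply: lt_le_trans (Hi j0 isT); rewrite normr_gt0.
have gsum : \sum_j gram A i j * x j = 0.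
  transitivity (\sum_k A k i * \sum_j A k j * x j); last first.
    by rewrite big1 // => k _; rewrite ker mulr0.
  rewrite /gram; under eq_bigr => j _ do rewrite mulr_suml.
  rewrite exchange_big /=; apply: eq_bigr => k _; rewrite mulr_sumr.
  by apply: eq_bigr => j _; rewrite mulrA.
rewrite (bigD1 i) //= gram_ii mul1r in gsum.
have : `|x i| <= \sum_(j | j != i) coherence A * `|x i|.
  have e : x i = - \sum_(j | j != i) gram A i j * x j.
    by apply/eqP; rewrite -addr_eq0 gsum.
  rewrite [in X in X <= _]e.
  rewrite normrN; apply: le_trans (ler_norm_sum _ _ _) _.
  apply: ler_sum => j ji; rewrite normrM.
  apply: ler_pM => //; [exact: gram_le | exact: (Hi j isT)].
rewrite sumr_const cardC1 card_ord => h; rewrite -mulr_natr in h.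
rewrite -(ler_pM2r xi0); apply: le_trans _ (le_trans h _); first by rewrite mul1r.
by rewrite le_eqVlt; apply/orP; left; apply/eqP; ring.
Qed.

End Proof.

Theorem mainTheorem4 (R : realFieldType) (n m : nat) (A : 'M[R]_(n, m)) :
  (n < m)%N ->
  (forall i : 'I_m, \sum_(k < n) A k i ^+ 2 = 1) ->
  0 < coherence A ->
  forall k : nat, k%:R < 2^-1 * (1 + (coherence A)^-1) ->
    (forall S : {set 'I_m}, #|S| = k -> \sum_(i in S) rho A i < 2^-1) /\
    (k <= l_star A)%N.
Proof.
move=> nm hn hmu k hk.
move: hmu hk.
set mu := coherence A => hmu hk.
set b := mu / (mu + 1).
have hk' : k%:R * mu < 2^-1 * (mu + 1).
  have : k%:R * mu < 2^-1 * (1 + mu^-1) * mu by rewrite ltr_pM2r.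
  rewrite (_ : 2^-1 * (1 + mu^-1) * mu = 2^-1 * (mu + 1)) //.
  field; by rewrite gt_eqF.
have kb : k%:R * b < 2^-1.
  rewrite /b mulrA ltr_pdivrMr //; lra.
have b0 : 0 <= b by exact: rho_bound_ge0.
split.
  move=> S hS; apply: le_lt_trans _ kb.
  apply: le_trans (ler_sum _ (fun i _ => @rho_le _ _ _ A hn i)) _.
  by rewrite sumr_const hS mulr_natl.
have km : (k < m.+1)%N.
  have h1 := @coh_lower _ _ _ A hn nm; rewrite -/mu in h1.
  have h2 : mu^-1 <= m.-1%:R.
    by rewrite -div1r ler_pdivrMr.
  have e : (m.+1 = m.-1 + 2)%N by lia.
  have : k%:R < m.+1%:R :> R.
    rewrite e natrD; apply: lt_le_trans hk _.
    have h3 : 0 <= m.-1%:R :> R by [].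
    rewrite mulrC ler_pdivrMr //; lra.
  by rewrite ltr_nat.
rewrite /l_star; apply: (@leq_bigmax_cond _ _ (fun l : 'I_m.+1 => nat_of_ord l) (Ordinal km)) => /=.
rewrite /top_sum; apply: le_lt_trans _ kb.
set s := sort _ _.
have hs : forall j, nth 0 s j <= b.
  move=> j; case: (ltnP j (size s)) => h.
    have := mem_nth 0 h; rewrite mem_sort => /mapP [i _ ->]; exact: rho_le.
  by rewrite nth_default.
apply: le_trans (ler_sum _ (fun (j : 'I_k) _ => hs j)) _.
by rewrite sumr_const card_ord mulr_natl.
Qed.
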